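(* Let $\mu>0$, let $0<j_1<j_2$ be the two smallest positive zeros of the Bessel function $J_1$, and let $\rho>(j_2/j_1)^2$. Then there exists $\omega$ with $j_1\sqrt{\mu/\rho}<\omega<j_2\sqrt{\mu/\rho}$ (in particular $j_1^2\mu\le\rho\omega^2\le j_2^2\mu$) such that $$\det\begin{pmatrix} J_1\big(\omega\sqrt{1/\mu}\big) & J_1\big(\omega\sqrt{\rho/\mu}\big)\\ \omega\sqrt{1/\mu}\,J_1'\big(\omega\sqrt{1/\mu}\big) & \omega\sqrt{\rho/\mu}\,J_1'\big(\omega\sqrt{\rho/\mu}\big)\end{pmatrix}=0 .$$ Consequently, any family of such roots $\omega=\omega(\rho)$ satisfies $\rho\,\omega(\rho)^4\to0$ as $\rho\to\infty$.
   Context: $J_1$ denotes the Bessel function of the first kind of order one and $J_1'$ its derivative. *)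

(* Defs.v *)
From Stdlib Require Import Reals Factorial ClassicalEpsilon.
Open Scope R_scope.

Definition J1_term (x : R) (k : nat) : R :=
  (-1) ^ k / (INR (fact k) * INR (fact (S k))) * (x / 2) ^ (2 * k + 1).

(* J_1(x): the sum of its (everywhere convergent) power series. *)
Definition J1 (x : R) : R :=
  epsilon (inhabits 0) (fun l => infinite_sum (J1_term x) l).

Definition J1' (x : R) : R :=
  epsilon (inhabits 0) (fun l => derivable_pt_lim J1 x l).

Definition bessel_det (mu rho omega : R) : R :=
  let a := omega * sqrt (1 / mu) in
  let b := omega * sqrt (rho / mu) in
  J1 a * (b * J1' b) - J1 b * (a * J1' a).

(* Main.v *)
Require Import Defs.
From Stdlib Require Import Reals Factorial Lra Lia ClassicalEpsilon.
From Coquelicot Require Import Coquelicot.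
Open Scope R_scope.

Definition cJ (k : nat) : R := (-1) ^ k / (INR (fact k) * INR (fact (S k))).

Lemma cJ_nz k : cJ k <> 0.
Proof.
  unfold cJ. apply Rmult_integral_contrapositive_currified.
  - apply pow_nonzero; lra.
  - apply Rinv_neq_0_compat, Rmult_integral_contrapositive_currified; apply INR_fact_neq_0.
Qed.

Lemma cJ_ratio n : Rabs (cJ (S n) / cJ n) = / (INR (S n) * INR (S (S n))).
Proof.
  unfold cJ. rewrite (fact_simpl (S n)), (fact_simpl n), !mult_INR.
  assert (h1 := INR_fact_neq_0 n).
  assert (h2 : INR (S n) <> 0) by (apply not_0_INR; lia).
  assert (h3 : INR (S (S n)) <> 0) by (apply not_0_INR; lia).
  assert (h4 : (-1)^n <> 0) by (apply pow_nonzero; lra).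
  replace ((-1) ^ S n / (INR (S n) * INR (fact n) * (INR (S (S n)) * (INR (S n) * INR (fact n)))) /
    ((-1) ^ n / (INR (fact n) * (INR (S n) * INR (fact n)))))
    with (- / (INR (S n) * INR (S (S n)))) by (simpl; field; repeat split; auto).
  rewrite Rabs_Ropp, Rabs_right; auto.
  apply Rle_ge, Rlt_le, Rinv_0_lt_compat, Rmult_lt_0_compat; apply lt_0_INR; lia.
Qed.

Lemma cJ_rad : CV_radius cJ = p_infty.
Proof.
  apply CV_radius_infinite_DAlembert; [apply cJ_nz|].
  apply is_lim_seq_le_le with (u := fun _ => 0) (w := fun n => / INR (S n)).
  - intro n. rewrite cJ_ratio. split.
    + apply Rlt_le, Rinv_0_lt_compat, Rmult_lt_0_compat; apply lt_0_INR; lia.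
    + apply Rinv_le_contravar. apply lt_0_INR; lia.
      rewrite <- (Rmult_1_r (INR (S n))) at 1. apply Rmult_le_compat_l.
      apply pos_INR. rewrite S_INR, S_INR. assert (0 <= INR n) by apply pos_INR. lra.
  - apply is_lim_seq_const.
  - apply (is_lim_seq_incr_1 (fun n => / INR n)).
    replace (Finite 0) with (Rbar_inv p_infty) by reflexivity.
    apply is_lim_seq_inv. apply is_lim_seq_INR. discriminate.
Qed.

Definition Pj (y : R) := PSeries cJ y.

Lemma J1_eq x : J1 x = x / 2 * Pj ((x/2)^2).
Proof.
  assert (H : infinite_sum (J1_term x) (x / 2 * Pj ((x/2)^2))).
  { apply is_series_Reals.
    assert (Hp : is_pseries cJ ((x/2)^2) (Pj ((x/2)^2))).
    { apply PSeries_correct, CV_radius_inside. rewrite cJ_rad. exact I. }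
    apply (is_series_scal (x/2)) in Hp.
    eapply is_series_ext; [|exact Hp].
    intro k. unfold J1_term. replace (2 * k + 1)%nat with (S (2 * k)) by lia.
    rewrite <- (tech_pow_Rmult _ (2 * k)), pow_mult, pow_n_pow. unfold scal, cJ; simpl; unfold mult; simpl. ring. }
  unfold J1. apply (uniqueness_sum (J1_term x)); auto.
  apply epsilon_spec. eauto.
Qed.

Lemma J1_der x : derivable_pt_lim J1 x (J1' x).
Proof.
  unfold J1'. apply epsilon_spec.
  assert (E : ex_derive (fun x => x / 2 * Pj ((x/2)^2)) x).
  { unfold Pj. auto_derive.
    eexists. apply is_derive_PSeries. rewrite cJ_rad. exact I. }
  destruct E as [l Hl]. exists l.
  apply is_derive_Reals.
  eapply is_derive_ext; [|exact Hl]. intro t. simpl. symmetry. apply J1_eq.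
Qed.

Lemma J1_cont x : continuity_pt J1 x.
Proof. apply derivable_continuous_pt. exists (J1' x). apply J1_der. Qed.

Lemma part1 (mu j1 j2 : R)
  (hmu : 0 < mu)
  (hj1 : 0 < j1) (hj12 : j1 < j2)
  (hz1 : J1 j1 = 0) (hz2 : J1 j2 = 0)
  (hsmall : forall x, 0 < x -> x < j2 -> J1 x = 0 -> x = j1) rho :
  (j2 / j1) ^ 2 < rho ->
     exists omega,
       j1 * sqrt (mu / rho) < omega /\ omega < j2 * sqrt (mu / rho) /\
       bessel_det mu rho omega = 0.
Proof.
  intro hr.
  assert (hq : 0 < j2 / j1) by (apply Rdiv_lt_0_compat; lra).
  assert (hrho : 0 < rho) by (assert (0 < (j2/j1)^2) by (apply pow_lt; lra); lra).
  set (s := sqrt rho).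
  assert (hs : j2 / j1 < s).
  { unfold s. rewrite <- (sqrt_pow2 (j2/j1)) by lra. apply sqrt_lt_1_alt. split; [|exact hr].
    apply pow_le; lra. }
  assert (hs0 : 0 < s) by lra.
  assert (hjs : j2 / s < j1).
  { apply (Rmult_lt_reg_r s); [lra|]. unfold Rdiv. rewrite Rmult_assoc, Rinv_l by lra.
    apply (Rmult_lt_reg_r (/ j1)). apply Rinv_0_lt_compat; lra.
    replace (j1 * s * / j1) with s by (field; lra). lra. }
  assert (hnz : forall x, j1 <= x <= j2 -> J1 (x / s) <> 0).
  { intros x hx E. assert (0 < x / s) by (apply Rdiv_lt_0_compat; lra).
    assert (x / s <= j2 / s) by (apply Rmult_le_compat_r; [apply Rlt_le, Rinv_0_lt_compat; lra| lra]).
    assert (x / s = j1) by (apply hsmall; auto; lra). lra. }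
  set (f2 := fun x => J1 (x / s)).
  set (G := (J1 / f2)%F).
  set (Gd := fun x => (J1' x * f2 x - (J1' (x / s) * / s) * J1 x) / (f2 x)²).
  assert (HG : forall x, j1 <= x <= j2 -> derivable_pt_lim G x (Gd x)).
  { intros x hx. apply derivable_pt_lim_div.
    - apply J1_der.
    - unfold f2. apply is_derive_Reals.
      replace (J1' (x / s) * / s) with (scal (/ s) (J1' (x / s))) by (unfold scal; simpl; unfold mult; simpl; ring).
      apply (is_derive_comp J1 (fun x => x / s)).
      + apply is_derive_Reals, J1_der.
      + auto_derive; auto. field. lra.
    - apply hnz; auto. }
  assert (pr : forall x, j1 < x < j2 -> derivable_pt G x).
  { intros x hx. exists (Gd x). apply HG; lra. }
  destruct (Rolle G j1 j2 pr) as [c [P Hc]].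
  - intros x hx. apply derivable_continuous_pt. exists (Gd x). apply HG; auto.
  - exact hj12.
  - unfold G, div_fct. rewrite hz1, hz2. unfold Rdiv. ring.
  - rewrite (derive_pt_eq_0 G c (Gd c) (pr c P)) in Hc by (apply HG; lra).
    assert (hc2 : f2 c <> 0) by (apply hnz; lra).
    assert (N : J1' c * f2 c - J1' (c / s) * / s * J1 c = 0).
    { unfold Gd in Hc. unfold Rdiv in Hc. apply Rmult_integral in Hc. destruct Hc as [H|H]; auto.
      exfalso. revert H. apply Rinv_neq_0_compat. unfold Rsqr. apply Rmult_integral_contrapositive; auto. }
    exists (c * sqrt (mu / rho)).
    assert (hsq : 0 < sqrt (mu / rho)) by (apply sqrt_lt_R0, Rdiv_lt_0_compat; lra).
    split; [apply Rmult_lt_compat_r; lra|].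
    split; [apply Rmult_lt_compat_r; lra|].
    assert (ea : c * sqrt (mu / rho) * sqrt (1 / mu) = c / s).
    { rewrite Rmult_assoc, <- sqrt_mult_alt by (apply Rlt_le, Rdiv_lt_0_compat; lra).
      replace (mu / rho * (1 / mu)) with (/ rho) by (field; lra).
      rewrite sqrt_inv. reflexivity. }
    assert (eb : c * sqrt (mu / rho) * sqrt (rho / mu) = c).
    { rewrite Rmult_assoc, <- sqrt_mult_alt by (apply Rlt_le, Rdiv_lt_0_compat; lra).
      replace (mu / rho * (rho / mu)) with 1 by (field; lra).
      rewrite sqrt_1. ring. }
    unfold bessel_det. rewrite ea, eb. unfold f2 in N.
    replace (J1 (c / s) * (c * J1' c) - J1 c * (c / s * J1' (c / s)))
      with (c * (J1' c * J1 (c / s) - J1' (c / s) * / s * J1 c)) by (unfold Rdiv; ring).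
    rewrite N. ring.
Qed.

Lemma part2 (mu j1 j2 : R)
  (hmu : 0 < mu)
  (hj1 : 0 < j1) (hj12 : j1 < j2) :
  (forall omega : R -> R,
     (forall rho, (j2 / j1) ^ 2 < rho ->
        j1 * sqrt (mu / rho) < omega rho /\ omega rho < j2 * sqrt (mu / rho) /\
        bessel_det mu rho (omega rho) = 0) ->
     forall eps, 0 < eps -> exists M, forall rho, M < rho -> (j2 / j1) ^ 2 < rho ->
        Rabs (rho * (omega rho) ^ 4) < eps).
Proof.
  intros w Hw eps he.
  exists (j2 ^ 4 * mu ^ 2 / eps). intros rho hM hr.
  assert (hq : 0 < j2 / j1) by (apply Rdiv_lt_0_compat; lra).
  assert (hrho : 0 < rho) by (assert (0 < (j2/j1)^2) by (apply pow_lt; lra); lra).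
  destruct (Hw rho hr) as [h1 [h2 _]].
  set (q := sqrt (mu / rho)) in *.
  assert (hq0 : 0 < q) by (apply sqrt_lt_R0, Rdiv_lt_0_compat; lra).
  assert (hq2 : q * q = mu / rho) by (apply sqrt_sqrt, Rlt_le, Rdiv_lt_0_compat; lra).
  assert (hw0 : 0 < w rho) by (assert (0 < j1 * q) by (apply Rmult_lt_0_compat; lra); lra).
  assert (h4 : w rho ^ 4 < (j2 * q) ^ 4) .
  { assert (hb : 0 < j2 * q) by (apply Rmult_lt_0_compat; lra).
    set (a := w rho) in *. set (b := j2 * q) in *.
    assert (a * a < b * b) by (apply Rmult_le_0_lt_compat; lra).
    replace (a ^ 4) with ((a*a)*(a*a)) by ring. replace (b ^ 4) with ((b*b)*(b*b)) by ring.
    apply Rmult_le_0_lt_compat; nra. }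
  rewrite Rabs_right by (apply Rle_ge, Rmult_le_pos; [lra | apply pow_le; lra]).
  assert (E : rho * (j2 * q) ^ 4 = j2 ^ 4 * mu ^ 2 / rho).
  { replace ((j2 * q) ^ 4) with (j2 ^ 4 * (q * q) ^ 2) by ring. rewrite hq2. field. lra. }
  assert (rho * w rho ^ 4 < rho * (j2 * q) ^ 4) by (apply Rmult_lt_compat_l; lra).
  assert (j2 ^ 4 * mu ^ 2 / rho < eps).
  { apply (Rmult_lt_reg_r rho); [lra|]. unfold Rdiv. rewrite Rmult_assoc, Rinv_l, Rmult_1_r by lra.
    apply (Rmult_lt_reg_r (/ eps)). apply Rinv_0_lt_compat; lra.
    replace (eps * rho * / eps) with rho by (field; lra). exact hM. }
  lra.
Qed.

Theorem mainTheorem5 (mu j1 j2 : R)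
  (hmu : 0 < mu)
  (hj1 : 0 < j1) (hj12 : j1 < j2)
  (hz1 : J1 j1 = 0) (hz2 : J1 j2 = 0)
  (hsmall : forall x, 0 < x -> x < j2 -> J1 x = 0 -> x = j1) :
  (forall rho, (j2 / j1) ^ 2 < rho ->
     exists omega,
       j1 * sqrt (mu / rho) < omega /\ omega < j2 * sqrt (mu / rho) /\
       bessel_det mu rho omega = 0)
  /\
  (forall omega : R -> R,
     (forall rho, (j2 / j1) ^ 2 < rho ->
        j1 * sqrt (mu / rho) < omega rho /\ omega rho < j2 * sqrt (mu / rho) /\
        bessel_det mu rho (omega rho) = 0) ->
     forall eps, 0 < eps -> exists M, forall rho, M < rho -> (j2 / j1) ^ 2 < rho ->
        Rabs (rho * (omega rho) ^ 4) < eps).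
Proof.
  split.
  - intro rho. apply (part1 mu j1 j2); auto.
  - apply part2; auto.
Qed.
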